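(* Let $E$ be a graph and let $G_E$ be the set of pairs $(p,q)$ of paths with $\mathbf{r}(p)=\mathbf{r}(q)$ (corresponding to the elements $pq^*$ of $L_K(E)$). Define $(pu,qu)\preceq(p,q)$ for every $(p,q)\in G_E$ and every path $u$ with $\mathbf{s}(u)=\mathbf{r}(p)$ (''$(pu,qu)$ reduces to $(p,q)$''). Call $(p,q)$ irreducible if $(p,q)\preceq(r,s)$ implies $p=r$ and $q=s$. Call two elements comparable, written $(p_1,q_1)\sim(p_2,q_2)$, if there are $(p,q)\in G_E$ and paths $u_1,u_2$ with $(p_1,q_1)=(pu_1,qu_1)$ and $(p_2,q_2)=(pu_2,qu_2)$. Then: (1) every element of $G_E$ reduces to a unique irreducible element; (2) two elements of $G_E$ are comparable if and only if they reduce to the same irreducible element, and this irreducible element is unique; (3) $\sim$ is an equivalence relation on $G_E$, and all elements of one equivalence class reduce to the same (unique) irreducible element; (4) if $t$ is a canonical trace on $L_K(E)$ (for some field $K$) and $(p,q),(r,s)\in G_E$ satisfy $t\big(pq^*(rs^* )^*\big)\neq0$, then $(p,q)\sim(r,s)$.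
   Context: A (directed) graph $E=(E^0,E^1,\mathbf{s},\mathbf{r})$ has vertex set $E^0$, edge set $E^1$, source and range maps; no finiteness or countability is assumed. A path is a vertex $v$ (length $0$, $\mathbf{s}(v)=\mathbf{r}(v)=v$) or a sequence $p=e_1\cdots e_n$ of edges with $\mathbf{r}(e_i)=\mathbf{s}(e_{i+1})$, length $|p|=n$, $\mathbf{s}(p)=\mathbf{s}(e_1)$, $\mathbf{r}(p)=\mathbf{r}(e_n)$; $pu$ denotes concatenation (with $pv=p$ for the vertex $v=\mathbf{r}(p)$). A vertex $v$ is regular if $\mathbf{s}^{-1}(v)$ is nonempty and finite. The Leavitt path algebra $L_K(E)$ over a field $K$ with involution is the free $K$-algebra generated by $E^0\cup E^1\cup\{e^*:e\in E^1\}$ subject to (V) $vw=\delta_{v,w}v$; (E1) $\mathbf{s}(e)e=e\mathbf{r}(e)=e$; (E2) $\mathbf{r}(e)e^*=e^*\mathbf{s}(e)=e^*$; (CK1) $e^*f=\delta_{e,f}\mathbf{r}(e)$; (CK2) $v=\sum_{e\in\mathbf{s}^{-1}(v)}ee^*$ for regular $v$; for a path $p=e_1\cdots e_n$, $p^*=e_n^*\cdots e_1^*$, $v^*=v$, and the involution is $(\sum a_ip_iq_i^* )^*=\sum a_i^*q_ip_i^*$. A trace is an additive map $t$ with $t(xy)=t(yx)$; a trace $t$ on $L_K(E)$ is canonical if $t(pq^* )=\delta_{p,q}\,t(\mathbf{r}(p))$ for all paths $p,q$ with $\mathbf{r}(p)=\mathbf{r}(q)$. *)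

(* Defs.v *)
From HB Require Import structures.
From mathcomp Require Import all_boot all_order all_algebra.
From Stdlib Require Lists.List.
Set Implicit Arguments. Unset Strict Implicit. Unset Printing Implicit Defensive.
Import GRing.Theory.
Local Open Scope ring_scope.

Section Graph.
Variables (E0 E1 : Type) (src rng : E1 -> E0).

(* A gpath is represented as (start vertex, list of edges).  The vertex
   gpath v is (v, [::]); a gpath e1...en is (s(e1), [:: e1; ...; en]). *)
Definition gpath := (E0 * seq E1)%type.

Fixpoint chain (v : E0) (l : seq E1) : Prop :=
  match l with
  | [::] => True
  | e :: l' => src e = v /\ chain (rng e) l'
  end.

Fixpoint pend (v : E0) (l : seq E1) : E0 :=
  match l with
  | [::] => v
  | e :: l' => pend (rng e) l'
  end.

Definition is_path (p : gpath) : Prop := chain p.1 p.2.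
Definition psrc (p : gpath) : E0 := p.1.
Definition prng (p : gpath) : E0 := pend p.1 p.2.
(* concatenation p u (meaningful when psrc u = prng p); p v = p, v u = u *)
Definition pcat (p u : gpath) : gpath := (p.1, p.2 ++ u.2).

Definition inG (x : gpath * gpath) : Prop :=
  is_path x.1 /\ is_path x.2 /\ prng x.1 = prng x.2.

Definition pq_reduces (x y : gpath * gpath) : Prop :=
  inG y /\ exists u : gpath, is_path u /\ psrc u = prng y.1 /\
     x = (pcat y.1 u, pcat y.2 u).

Definition pq_irreducible (x : gpath * gpath) : Prop :=
  forall y, pq_reduces x y -> x.1 = y.1 /\ x.2 = y.2.

Definition pq_comparable (x1 x2 : gpath * gpath) : Prop :=
  exists y, inG y /\ exists u1 u2 : gpath,
    is_path u1 /\ psrc u1 = prng y.1 /\ is_path u2 /\ psrc u2 = prng y.1 /\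
    x1 = (pcat y.1 u1, pcat y.2 u1) /\ x2 = (pcat y.1 u2, pcat y.2 u2).

(* generators: vertices, edges, ghost edges e^star *)
Inductive gen := GV of E0 | GE of E1 | GS of E1.
Definition word := seq gen.

Variable K : fieldType.
(* formal K-linear combinations of words = elements of the (unitized) free
   K-algebra on the generators; the empty word is the unit. *)
Definition fa := seq (K * word).
Definition fmul (x y : fa) : fa :=
  [seq (a.1 * b.1, a.2 ++ b.2) | a <- x, b <- y].

(* generators of the ideal of relations (V),(E1),(E2),(CK1),(CK2) *)
Inductive lrel : fa -> Prop :=
  | relV_eq v : lrel [:: (1, [:: GV v; GV v]); (-1, [:: GV v])]
  | relV_neq v w : v <> w -> lrel [:: (1, [:: GV v; GV w])]
  | relE1s e : lrel [:: (1, [:: GV (src e); GE e]); (-1, [:: GE e])]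
  | relE1r e : lrel [:: (1, [:: GE e; GV (rng e)]); (-1, [:: GE e])]
  | relE2r e : lrel [:: (1, [:: GV (rng e); GS e]); (-1, [:: GS e])]
  | relE2s e : lrel [:: (1, [:: GS e; GV (src e)]); (-1, [:: GS e])]
  | relCK1_eq e : lrel [:: (1, [:: GS e; GE e]); (-1, [:: GV (rng e)])]
  | relCK1_neq e f : e <> f -> lrel [:: (1, [:: GS e; GE f])]
  | relCK2 v (l : seq E1) :
      l <> [::] -> List.NoDup l -> (forall e, src e = v <-> List.In e l) ->
      lrel ((1, [:: GV v]) :: [seq (-1, [:: GE e; GS e]) | e <- l]).

Definition pword (p : gpath) : word :=
  if p.2 is [::] then [:: GV p.1] else [seq GE e | e <- p.2].
Definition sword (q : gpath) : word :=
  if q.2 is [::] then [:: GV q.1] else rev [seq GS e | e <- q.2].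
Definition mono (p q : gpath) : fa := [:: (1, pword p ++ sword q)].

(* A trace on L_K(E) with values in an abelian group V: an additive map on
   the free algebra (well defined on formal combinations), vanishing on the
   ideal generated by the relations, with t(xy) = t(yx). *)
Definition is_trace (V : zmodType) (t : fa -> V) : Prop :=
  [/\ t [::] = 0,
      (forall x y, t (x ++ y) = t x + t y),
      (forall a b w, t [:: (a + b, w)] = t [:: (a, w)] + t [:: (b, w)]),
      (forall x r y, lrel r -> t (fmul x (fmul r y)) = 0) &
      (forall x y, t (fmul x y) = t (fmul y x))].

Definition is_canonical (V : zmodType) (t : fa -> V) : Prop :=
  forall p q : gpath, is_path p -> is_path q -> prng p = prng q ->
    (p = q -> t (mono p q) = t [:: (1, [:: GV (prng p)])]) /\
    (p <> q -> t (mono p q) = 0).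

End Graph.

(* Main.v *)
Require Import Defs.
From HB Require Import structures.
From mathcomp Require Import all_boot all_order all_algebra.
From Stdlib Require Import Classical.
Import GRing.Theory.
Local Open Scope ring_scope.
Set Implicit Arguments. Unset Strict Implicit.

Section Comb.
Variables (E0 E1 : Type) (src rng : E1 -> E0).

Lemma chain_cat v (l1 l2 : seq E1) :
  chain src rng v (l1 ++ l2) <-> chain src rng v l1 /\ chain src rng (pend rng v l1) l2.
Proof.
elim: l1 v => [|e l IH] v /=; first by tauto.
rewrite IH; tauto.
Qed.

Lemma pend_cat v (l1 l2 : seq E1) : pend rng v (l1 ++ l2) = pend rng (pend rng v l1) l2.
Proof. by elim: l1 v => [|e l IH] v //=. Qed.

Lemma pend_rcons v (l : seq E1) e : pend rng v (rcons l e) = rng e.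
Proof. by elim: l v => [|f l IH] v //=. Qed.

Notation red := (pq_reduces src rng).
Notation irr := (pq_irreducible src rng).

Lemma red_refl x : inG src rng x -> red x x.
Proof.
move=> Hx; split=> //; exists (prng rng x.1, [::]); split=> //; split=> //.
by case: x {Hx} => [[a b] [c d]]; rewrite /pcat /= !cats0.
Qed.

Lemma red_trans x y z : red x y -> red y z -> red x z.
Proof.
move=> [Hy [u [Pu [Su ->]]]] [Hz [w [Pw [Sw Ey]]]].
split=> //; exists (pcat w u); split; last split.
- have Hs : psrc u = pend rng w.1 w.2.
    by rewrite Su Ey /prng /pcat /= pend_cat; move: Sw; rewrite /psrc /prng => ->.
  move: Pu Pw; rewrite /is_path /pcat /= => Pu Pw; apply/chain_cat; split=> //.
  by rewrite -Hs.
- by [].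
- by rewrite Ey /pcat /= !catA.
Qed.

Lemma red_size x y : red x y -> ~ (x.1 = y.1 /\ x.2 = y.2) -> (size y.1.2 < size x.1.2)%N.
Proof.
move=> [Hy [u [Pu [Su ->]]]] /=; rewrite /pcat /= size_cat.
case: u Pu Su => a [|e l] //= _ _.
  by rewrite !cats0 -!surjective_pairing => H; exfalso; apply: H.
by rewrite addnS ltnS leq_addr.
Qed.

Lemma irr_exists n x : (size x.1.2 <= n)%N -> inG src rng x -> exists y, irr y /\ red x y.
Proof.
elim: n x => [|n IH] x Hs Hx.
  exists x; split; last exact: red_refl.
  move=> y Hr; apply: NNPP => Hn; have := red_size Hr Hn; by rewrite leqn0 in Hs; rewrite (eqP Hs).
case: (classic (irr x)) => Hi; first by exists x; split=> //; exact: red_refl.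
have [y Hy] : exists y, ~ (red x y -> x.1 = y.1 /\ x.2 = y.2).
  by apply: NNPP => H; apply: Hi => y; apply: NNPP => H2; apply: H; exists y.
have Hr : red x y by apply: NNPP => H; apply: Hy => /H.
have Hn : ~ (x.1 = y.1 /\ x.2 = y.2) by move=> H; apply: Hy.
have Hlt := red_size Hr Hn.
have [z [Hz Hyz]] := IH y (leq_trans (ltnSE (leq_trans Hlt Hs)) (leqnn _)) Hr.1.
by exists z; split=> //; exact: red_trans Hyz.
Qed.

Lemma pref_split (l1 a l2 b : seq E1) : l1 ++ a = l2 ++ b -> (size a <= size b)%N ->
  exists w, l1 = l2 ++ w /\ b = w ++ a.
Proof.
move=> E Hs.
have Hsz : (size l2 <= size l1)%N.
  have := congr1 size E; rewrite !size_cat => Es.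
  by rewrite -(leq_add2r (size a)) Es leq_add2l.
exists (drop (size l2) l1).
have Et : take (size l2) l1 = l2.
  by have := congr1 (take (size l2)) E; rewrite (@take_size_cat _ _ l2) // takel_cat.
have Hl1 : l1 = l2 ++ drop (size l2) l1 by rewrite -{1}Et cat_take_drop.
split=> //.
have := E; rewrite {1}Hl1 -catA => E2.
by have := congr1 (drop (size l2)) E2; rewrite !drop_size_cat.
Qed.


Lemma cat2r_inj (s1 s2 s : seq E1) : s1 ++ s = s2 ++ s -> s1 = s2.
Proof.
move=> /(congr1 rev); rewrite !rev_cat => /(congr1 (drop (size (rev s)))).
by rewrite !drop_size_cat // => /(congr1 rev); rewrite !revK.
Qed.

Lemma irr_unique_aux (x y1 y2 : gpath E0 E1 * gpath E0 E1) (u1 u2 : gpath E0 E1) : inG src rng y2 ->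
  is_path src rng u2 -> psrc u2 = prng rng y2.1 ->
  x = (pcat y1.1 u1, pcat y1.2 u1) -> x = (pcat y2.1 u2, pcat y2.2 u2) ->
  (size u1.2 <= size u2.2)%N -> red y1 y2.
Proof.
move=> Hy2 Pu2 Su2 ->; rewrite /pcat => -[Ea Eb Ec Ed] Hs.
have [w [Hw1 Hw2]] := pref_split Eb Hs.
have Hw3 : y1.2.2 = y2.2.2 ++ w.
  by move: Ed; rewrite Hw2 catA => /cat2r_inj.
split=> //; exists (prng rng y2.1, w); split; last split=> //.
- move: Pu2; rewrite /is_path Hw2 chain_cat => -[+ _]; by move: Su2; rewrite /psrc => ->.
- rewrite /pcat /=; clear Eb Ed; move: Ea Ec Hw1 Hw3.
  by case: y1 => [[a b] [c d]] /= -> -> -> ->.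
Qed.

Lemma irr_unique x y1 y2 : red x y1 -> red x y2 -> irr y1 -> irr y2 -> y1 = y2.
Proof.
move=> [H1 [u1 [P1 [S1 E1']]]] [H2 [u2 [P2 [S2 E2']]]] I1 I2.
case: (leqP (size u1.2) (size u2.2)) => Hs.
  have := I1 _ (irr_unique_aux H2 P2 S2 E1' E2' Hs).
  by case: (y1) => ??; case: (y2) => ?? /= [-> ->].
have := I2 _ (irr_unique_aux H1 P1 S1 E2' E1' (ltnW Hs)).
by case: (y1) => ??; case: (y2) => ?? /= [-> ->].
Qed.

Lemma part1 x : inG src rng x -> exists! y, irr y /\ red x y.
Proof.
move=> Hx; have [y [Iy Ry]] := irr_exists (leqnn _) Hx.
exists y; split=> // z [Iz Rz]; exact: irr_unique Ry Rz Iy Iz.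
Qed.

Notation cmp := (pq_comparable src rng).

Lemma cmp_iff x y : inG src rng x ->
  (cmp x y <-> exists z, irr z /\ red x z /\ red y z).
Proof.
move=> Hx; split.
  move=> [w [Hw [u1 [u2 [P1 [S1 [P2 [S2 [E1' E2']]]]]]]]].
  have Rx : red x w by split=> //; exists u1.
  have Ry : red y w by split=> //; exists u2.
  have [z [Iz Rz]] := irr_exists (leqnn _) Hw.
  by exists z; split=> //; split; apply: red_trans Rz.
move=> [z [Iz [[Hz [u1 [P1 [S1 E1']]]] [_ [u2 [P2 [S2 E2']]]]]]].
by exists z; split=> //; exists u1, u2.
Qed.

End Comb.

Section Alg.
Variables (E0 E1 : Type) (src rng : E1 -> E0) (K : fieldType) (V : zmodType)
  (t : fa E0 E1 K -> V).
Hypothesis Htr : is_trace src rng t.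

Definition T (w : word E0 E1) := t [:: (1, w)].
Definition weq (w1 w2 : word E0 E1) := forall A B, T (A ++ w1 ++ B) = T (A ++ w2 ++ B).
Definition Z (w : word E0 E1) := forall A B, T (A ++ w ++ B) = 0.

Lemma T0w w : t [:: (0, w)] = 0.
Proof.
case: Htr => _ _ Hc _ _.
have := Hc 0 0 w; rewrite addr0 => H.
by apply: (@addrI _ (t [:: (0, w)])); rewrite addr0 -H.
Qed.

Lemma Tneg w : t [:: (-1, w)] = - T w.
Proof.
case: Htr => _ _ Hc _ _.
have := Hc 1 (-1) w; rewrite subrr T0w => /esym/eqP; rewrite addrC addr_eq0 => /eqP.
by rewrite /T.
Qed.

Lemma rel2 w1 w2 : lrel src rng (K:=K) [:: (1, w1); (-1, w2)] -> weq w1 w2.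
Proof.
case: Htr => _ Hcat _ Hrel _ Hr A B.
have := Hrel [:: (1, A)] _ [:: (1, B)] Hr; rewrite /fmul /=.
rewrite -cat1s Hcat !mulr1 !mul1r Tneg => /eqP; rewrite subr_eq0 => /eqP.
by rewrite /T !catA.
Qed.

Lemma rel1 w : lrel src rng (K:=K) [:: (1, w)] -> Z w.
Proof.
case: Htr => _ Hcat _ Hrel _ Hr A B.
have := Hrel [:: (1, A)] _ [:: (1, B)] Hr; rewrite /fmul /= !mulr1.
by rewrite /T catA.
Qed.

Lemma Tcomm a b : T (a ++ b) = T (b ++ a).
Proof.
case: Htr => _ _ _ _ Hc.
by have := Hc [:: (1, a)] [:: (1, b)]; rewrite /fmul /= !mulr1.
Qed.

Lemma weq_refl w : weq w w. Proof. by []. Qed.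
Lemma weq_sym w1 w2 : weq w1 w2 -> weq w2 w1. Proof. by move=> H A B; rewrite H. Qed.
Lemma weq_trans w1 w2 w3 : weq w1 w2 -> weq w2 w3 -> weq w1 w3.
Proof. by move=> H1 H2 A B; rewrite H1 H2. Qed.
Lemma weq_ctx a b w1 w2 : weq w1 w2 -> weq (a ++ w1 ++ b) (a ++ w2 ++ b).
Proof.
move=> H A B; have := H (A ++ a) (b ++ B).
by rewrite -!catA.
Qed.
Lemma weq_cat a a' b b' : weq a a' -> weq b b' -> weq (a ++ b) (a' ++ b').
Proof.
move=> Ha Hb; apply: (@weq_trans _ (a' ++ b)).
  by have := weq_ctx [::] b Ha; rewrite /=.
by have := weq_ctx a' [::] Hb; rewrite /= !cats0.
Qed.
Lemma Z_weq w1 w2 : weq w1 w2 -> Z w2 -> Z w1.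
Proof. by move=> H Hz A B; rewrite H Hz. Qed.
Lemma Z_ctx a b w : Z w -> Z (a ++ w ++ b).
Proof. by move=> H A B; have := H (A ++ a) (b ++ B); rewrite -!catA. Qed.
Lemma weq_T w1 w2 : weq w1 w2 -> T w1 = T w2.
Proof. by move=> H; have := H [::] [::]; rewrite /= !cats0. Qed.
Lemma Z_T w : Z w -> T w = 0.
Proof. by move=> H; have := H [::] [::]; rewrite /= !cats0. Qed.


Lemma rVV v : weq [:: GV E1 v; GV E1 v] [:: GV E1 v].
Proof. exact: rel2 (relV_eq _ _ _ v). Qed.
Lemma rVW v w : v <> w -> Z [:: GV E1 v; GV E1 w].
Proof. move=> H; exact: rel1 (relV_neq src rng K H). Qed.
Lemma rE1s e : weq [:: GV E1 (src e); GE E0 e] [:: GE E0 e].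
Proof. exact: rel2 (relE1s _ _ _ e). Qed.
Lemma rE1r e : weq [:: GE E0 e; GV E1 (rng e)] [:: GE E0 e].
Proof. exact: rel2 (relE1r _ _ _ e). Qed.
Lemma rE2r e : weq [:: GV E1 (rng e); GS E0 e] [:: GS E0 e].
Proof. exact: rel2 (relE2r _ _ _ e). Qed.
Lemma rE2s e : weq [:: GS E0 e; GV E1 (src e)] [:: GS E0 e].
Proof. exact: rel2 (relE2s _ _ _ e). Qed.
Lemma rCK1 e : weq [:: GS E0 e; GE E0 e] [:: GV E1 (rng e)].
Proof. exact: rel2 (relCK1_eq _ _ _ e). Qed.
Lemma rCK1n e f : e <> f -> Z [:: GS E0 e; GE E0 f].
Proof. move=> H; exact: rel1 (relCK1_neq src rng K H). Qed.

Notation gv := (GV E1).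
Notation gE := (@GE E0 E1).
Notation gS := (@GS E0 E1).

Lemma pend_rcons' v (l : seq E1) e : pend rng v (rcons l e) = rng e.
Proof. by elim: l v => [|f l IH] v //=. Qed.

Lemma pword_nf (p : gpath E0 E1) : chain src rng p.1 p.2 ->
  weq (pword p) (gv p.1 :: map gE p.2).
Proof.
case: p => v [|e l] /=; first by move=> _; exact: weq_refl.
move=> [He _]; apply: weq_sym; rewrite -He.
by have := weq_ctx [::] (map gE l) (rE1s e).
Qed.

Lemma sword_nf (q : gpath E0 E1) : chain src rng q.1 q.2 ->
  weq (sword q) (rev (map gS q.2) ++ [:: gv q.1]).
Proof.
case: q => v [|e l] /=; first by move=> _; exact: weq_refl.
move=> [He _]; rewrite /sword /= rev_cons -cats1; apply: weq_sym; rewrite -He -catA /=.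
by have := weq_ctx (rev (map gS l)) [::] (rE2s e); rewrite cats0.
Qed.

Lemma vend v (l : seq E1) :
  weq ((gv v :: map gE l) ++ [:: gv (pend rng v l)]) (gv v :: map gE l).
Proof.
case: (lastP l) => [|l' e] /=; first exact: rVV.
rewrite pend_rcons' map_rcons -cats1 -catA /=.
have := weq_ctx (gv v :: map gE l') [::] (rE1r e).
by rewrite !cats0 /=.
Qed.

Lemma vstart v (l : seq E1) :
  weq ([:: gv (pend rng v l)] ++ rev (map gS l) ++ [:: gv v]) (rev (map gS l) ++ [:: gv v]).
Proof.
case: (lastP l) => [|l' e] /=; first exact: rVV.
rewrite pend_rcons' map_rcons rev_rcons /=.
by have := weq_ctx [::] (rev (map gS l') ++ [:: gv v]) (rE2r e).
Qed.

Lemma cancel_gen (l1 l2 : seq E1) v : chain src rng v l1 -> chain src rng v l2 ->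
  Z (rev (map gS l1) ++ gv v :: map gE l2) \/
  (exists l, l2 = l1 ++ l /\
     weq (rev (map gS l1) ++ gv v :: map gE l2) (gv (pend rng v l1) :: map gE l)) \/
  (exists l, l1 = l2 ++ l /\
     weq (rev (map gS l1) ++ gv v :: map gE l2) (rev (map gS l) ++ [:: gv (pend rng v l2)])).
Proof.
elim: l1 v l2 => [|e l1 IH] v l2 H1 H2.
  by right; left; exists l2; split=> //; exact: weq_refl.
case: l2 H2 => [|f l2] H2.
  by right; right; exists (e :: l1); split=> //; exact: weq_refl.
case: H1 => He H1'; case: H2 => Hf H2'; subst v.
have step1 : weq (rev (map gS (e :: l1)) ++ gv (src e) :: map gE (f :: l2))
                 (rev (map gS l1) ++ [:: gS e; gE f] ++ map gE l2).
  rewrite /= rev_cons -cats1 -catA /=.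
  by have := weq_ctx (rev (map gS l1)) (gE f :: map gE l2) (rE2s e).
case: (classic (e = f)) => [Ef|Hne]; last first.
  by left; apply: Z_weq step1 _; apply: Z_ctx; apply: rCK1n.
subst f.
have step2 : weq (rev (map gS l1) ++ [:: gS e; gE e] ++ map gE l2)
                 (rev (map gS l1) ++ gv (rng e) :: map gE l2).
  exact: weq_ctx (rCK1 e).
have st := weq_trans step1 step2.
case: (IH (rng e) l2 H1' H2') => [HZ|[[l [El Hw]]|[l [El Hw]]]].
- by left; apply: Z_weq st HZ.
- by right; left; exists l; split; [rewrite El | apply: weq_trans st Hw].
- by right; right; exists l; split; [rewrite El | apply: weq_trans st Hw].
Qed.

Lemma chain_cat' v (l1 l2 : seq E1) :
  chain src rng v (l1 ++ l2) <-> chain src rng v l1 /\ chain src rng (pend rng v l1) l2.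
Proof.
elim: l1 v => [|e l IH] v /=; first by tauto.
rewrite IH; tauto.
Qed.

Lemma pend_cat' v (l1 l2 : seq E1) : pend rng v (l1 ++ l2) = pend rng (pend rng v l1) l2.
Proof. by elim: l1 v => [|e l IH] v //=. Qed.

Lemma part4 : is_canonical src rng t ->
     forall p q r s : gpath E0 E1,
       inG src rng (p, q) -> inG src rng (r, s) ->
       t (fmul (mono K p q) (mono K s r)) != 0 ->
       pq_comparable src rng (p, q) (r, s).
Proof.
move=> Hcan.
have canon : forall a b : gpath E0 E1, is_path src rng a -> is_path src rng b ->
    prng rng a = prng rng b -> T (pword a ++ sword b) <> 0 -> a = b.
  move=> a b Pa Pb Eab HT; apply: NNPP => Hne; apply: HT.
  by have := (Hcan a b Pa Pb Eab).2 Hne; rewrite /mono.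
move=> [p1 pl] [q1 ql] [r1 rl] [s1 sl] [Pp [Pq Epq]] [Pr [Ps Ers]] Hnz.
rewrite /is_path /prng /= in Pp Pq Epq Pr Ps Ers.
have HT : T (pword (p1, pl) ++ sword (q1, ql) ++ pword (s1, sl) ++ sword (r1, rl)) <> 0.
  move: Hnz; rewrite /fmul /mono /= mulr1 -!catA => /eqP H; exact: H.
have hw1 := weq_cat (pword_nf (p:=(p1,pl)) Pp) (weq_cat (sword_nf (q:=(q1,ql)) Pq) (weq_cat (pword_nf (p:=(s1,sl)) Ps) (sword_nf (q:=(r1,rl)) Pr))).
have HT1 : T ((gv p1 :: map gE pl) ++ (rev (map gS ql) ++ [:: gv q1]) ++ (gv s1 :: map gE sl)
        ++ rev (map gS rl) ++ [:: gv r1]) <> 0.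
  by move=> H; apply: HT; rewrite (weq_T hw1); exact: H.
case: (classic (q1 = s1)) => [Eqs|Hne]; last first.
  exfalso; apply: HT1; apply: Z_T.
  have -> : (gv p1 :: map gE pl) ++ (rev (map gS ql) ++ [:: gv q1]) ++ (gv s1 :: map gE sl)
        ++ rev (map gS rl) ++ [:: gv r1]
      = ((gv p1 :: map gE pl) ++ rev (map gS ql)) ++ [:: gv q1; gv s1] ++
        (map gE sl ++ rev (map gS rl) ++ [:: gv r1]) by rewrite -!catA.
  exact: Z_ctx (rVW Hne).
subst s1.
have hw2 : weq ((gv p1 :: map gE pl) ++ (rev (map gS ql) ++ [:: gv q1]) ++ (gv q1 :: map gE sl)
        ++ rev (map gS rl) ++ [:: gv r1])
   ((gv p1 :: map gE pl) ++ (rev (map gS ql) ++ gv q1 :: map gE sl) ++ (rev (map gS rl) ++ [:: gv r1])).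
  have := weq_ctx ((gv p1 :: map gE pl) ++ rev (map gS ql))
                  (map gE sl ++ rev (map gS rl) ++ [:: gv r1]) (rVV q1).
  by rewrite -!catA.
have HT2 := HT1; rewrite (weq_T hw2) in HT2.
case: (cancel_gen Pq Ps) => [HZ|[[l [El Hw]]|[l [El Hw]]]].
- by exfalso; apply: HT2; apply: Z_T; apply: Z_ctx.
-
  have Hl : chain src rng (pend rng p1 pl) l.
    by move: Ps; rewrite El chain_cat' Epq => -[].
  have Pp' : chain src rng p1 (pl ++ l) by apply/chain_cat'.
  have hw3 := weq_ctx (gv p1 :: map gE pl) (rev (map gS rl) ++ [:: gv r1]) Hw.
  have HT3 := HT2; rewrite (weq_T hw3) -Epq in HT3.
  have hw4 := weq_ctx [::] (map gE l ++ rev (map gS rl) ++ [:: gv r1]) (vend p1 pl).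
  have HT4 : T ((gv p1 :: map gE (pl ++ l)) ++ (rev (map gS rl) ++ [:: gv r1])) <> 0.
    move: HT3; rewrite (_ : _ ++ _ ++ _ = [::] ++ ((gv p1 :: map gE pl) ++ [:: gv (pend rng p1 pl)])
         ++ map gE l ++ rev (map gS rl) ++ [:: gv r1]); last by rewrite /= -!catA.
    by rewrite (weq_T hw4) /= map_cat -!catA.
  have := weq_T (weq_cat (pword_nf (p:=(p1, pl ++ l)) Pp') (sword_nf (q:=(r1,rl)) Pr)).
  rewrite /= => HT5; rewrite -HT5 in HT4.
  have [E1' E2'] : (p1, pl ++ l) = (r1, rl).
    apply: canon HT4 => //; rewrite /prng /= pend_cat' Epq -pend_cat' -El.
    by move: Ers.
  subst r1 rl.
  exists ((p1, pl), (q1, ql)); split; first by rewrite /inG /is_path /prng /=.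
  exists (pend rng p1 pl, [::]), (pend rng p1 pl, l).
  by rewrite /is_path /psrc /prng /pcat /= !cats0 El.
-
  have Hl : chain src rng (pend rng r1 rl) l.
    by move: Pq; rewrite El chain_cat' -Ers => -[].
  have Pr' : chain src rng r1 (rl ++ l) by apply/chain_cat'.
  have hw3 := weq_ctx (gv p1 :: map gE pl) (rev (map gS rl) ++ [:: gv r1]) Hw.
  have HT3 := HT2; rewrite (weq_T hw3) -Ers in HT3.
  have hw4 := weq_ctx ((gv p1 :: map gE pl) ++ rev (map gS l)) [::] (vstart r1 rl).
  have HT4 : T ((gv p1 :: map gE pl) ++ (rev (map gS (rl ++ l)) ++ [:: gv r1])) <> 0.
    move: HT3; rewrite (_ : _ ++ _ ++ _ = ((gv p1 :: map gE pl) ++ rev (map gS l)) ++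
        ([:: gv (pend rng r1 rl)] ++ rev (map gS rl) ++ [:: gv r1]) ++ [::]); last first.
      by rewrite cats0 -!catA.
    by rewrite (weq_T hw4) cats0 map_cat rev_cat -!catA.
  have := weq_T (weq_cat (pword_nf (p:=(p1, pl)) Pp) (sword_nf (q:=(r1,rl ++ l)) Pr')).
  rewrite /= => HT5; rewrite -HT5 in HT4.
  have [E1' E2'] : (p1, pl) = (r1, rl ++ l).
    apply: canon HT4 => //; rewrite /prng /= Epq El !pend_cat' Ers.
    by [].
  subst p1 pl.
  exists ((r1, rl), (q1, sl)); split; first by rewrite /inG /is_path /prng /=.
  exists (pend rng r1 rl, l), (pend rng r1 rl, [::]).
  by rewrite /is_path /psrc /prng /pcat /= !cats0 El.
Qed.

End Alg.

Theorem lemma3p2 (E0 E1 : Type) (src rng : E1 -> E0) :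
  (* (1) *)
  (forall x, inG src rng x ->
     exists! y, pq_irreducible src rng y /\ pq_reduces src rng x y) /\
  (* (2) *)
  (forall x y, inG src rng x -> inG src rng y ->
     (pq_comparable src rng x y <->
        exists z, pq_irreducible src rng z /\ pq_reduces src rng x z /\ pq_reduces src rng y z) /\
     (pq_comparable src rng x y ->
        exists! z, pq_irreducible src rng z /\ pq_reduces src rng x z /\ pq_reduces src rng y z)) /\
  (* (3) *)
  ((forall x, inG src rng x -> pq_comparable src rng x x) /\
   (forall x y, inG src rng x -> inG src rng y ->
      pq_comparable src rng x y -> pq_comparable src rng y x) /\
   (forall x y z, inG src rng x -> inG src rng y -> inG src rng z ->
      pq_comparable src rng x y -> pq_comparable src rng y z -> pq_comparable src rng x z) /\
   (forall x y z, inG src rng x -> inG src rng y -> pq_comparable src rng x y ->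
      pq_irreducible src rng z -> pq_reduces src rng x z -> pq_reduces src rng y z)) /\
  (* (4) *)
  (forall (K : fieldType) (V : zmodType) (t : fa E0 E1 K -> V),
     is_trace src rng t -> is_canonical src rng t ->
     forall p q r s : gpath E0 E1,
       inG src rng (p, q) -> inG src rng (r, s) ->
       t (fmul (mono K p q) (mono K s r)) != 0 ->
       pq_comparable src rng (p, q) (r, s)).
Proof.
split; first by move=> x Hx; exact: part1.
split.
  move=> x y Hx Hy; split; first exact: cmp_iff.
  move=> /(cmp_iff _ Hx) [z [Iz [Rx Ry]]]; exists z; split=> // z' [Iz' [Rx' _]].
  exact: irr_unique Rx Rx' Iz Iz'.
split.
  split.
    move=> x Hx; apply/(cmp_iff _ Hx).
    have [z [Iz Rz]] := irr_exists (leqnn _) Hx; by exists z.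
  split.
    move=> x y Hx Hy /(cmp_iff _ Hx) [z [Iz [R1 R2]]]; apply/(cmp_iff _ Hy).
    by exists z.
  split.
    move=> x y z Hx Hy Hz /(cmp_iff _ Hx) [z1 [I1 [R1 R2]]] /(cmp_iff _ Hy) [z2 [I2 [R3 R4]]].
    apply/(cmp_iff _ Hx); exists z1; split=> //; split=> //.
    by rewrite (irr_unique R2 R3 I1 I2).
  move=> x y z Hx Hy /(cmp_iff _ Hx) [z' [Iz' [Rx' Ry']]] Iz Rz.
  by rewrite (irr_unique Rz Rx' Iz Iz').
move=> K V t Htr Hcan; exact: part4 Htr Hcan.
Qed.
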